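(* Let $W$ be any matrix and $A$ any full rank matrix with the same number of columns as $W$, and let $D$ be a square diagonal matrix (with as many rows as $A$) all of whose diagonal entries are at least $1$. Then $\|W(DA)^+\|_F\le\|WA^+\|_F$.
   Context: $M^+$ denotes the Moore–Penrose pseudo-inverse of $M$ and $\|\cdot\|_F$ the Frobenius norm. *)

(* Defs.v *)
From HB Require Import structures.
From mathcomp Require Import all_boot all_order all_algebra.
From Stdlib Require Import ClassicalEpsilon.
Set Implicit Arguments. Unset Strict Implicit. Unset Printing Implicit Defensive.
Import Order.TTheory GRing.Theory Num.Theory.
Local Open Scope ring_scope.

Definition is_mp_inverse (R : rcfType) (m n : nat)
  (A : 'M[R]_(m, n)) (X : 'M[R]_(n, m)) : Prop :=
  [/\ A *m X *m A = A, X *m A *m X = X,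
      (A *m X)^T = A *m X & (X *m A)^T = X *m A].

(* The Moore–Penrose pseudo-inverse A^+ (exists and is unique for real matrices). *)
Definition mpinv (R : rcfType) (m n : nat) (A : 'M[R]_(m, n)) : 'M[R]_(n, m) :=
  epsilon (inhabits 0) (is_mp_inverse A).

Definition frob (R : rcfType) (m n : nat) (M : 'M[R]_(m, n)) : R :=
  Num.sqrt (\sum_(i < m) \sum_(j < n) M i j ^+ 2).

Definition full_rank (R : fieldType) (m n : nat) (A : 'M[R]_(m, n)) : bool :=
  \rank A == minn m n.

(* Main.v *)
Require Import Defs.
From mathcomp Require Import all_boot all_order all_algebra.
From Stdlib Require Import ClassicalEpsilon.
Set Implicit Arguments. Unset Strict Implicit. Unset Printing Implicit Defensive.
Import Order.TTheory GRing.Theory Num.Theory.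
Local Open Scope ring_scope.

Section S.
Variable R : rcfType.

Definition fs (k l : nat) (M : 'M[R]_(k, l)) := \sum_(i < k) \sum_(j < l) M i j ^+ 2.

Lemma fs_tr k l (M : 'M[R]_(k, l)) : fs M = \tr (M *m M^T).
Proof.
rewrite /fs /mxtrace; apply: eq_bigr => i _; rewrite mxE.
by apply: eq_bigr => j _; rewrite mxE expr2.
Qed.

Lemma fs_ge0 k l (M : 'M[R]_(k, l)) : 0 <= fs M.
Proof. by apply: sumr_ge0 => i _; apply: sumr_ge0 => j _; apply: sqr_ge0. Qed.

Lemma mmt0 k l (M : 'M[R]_(k, l)) : M *m M^T = 0 -> M = 0.
Proof.
move=> H; apply/matrixP => i j; rewrite mxE.
have := congr1 (fun N : 'M[R]_k => N i i) H; rewrite !mxE => Hs.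
have Hnn : forall j0 : 'I_l, xpredT j0 -> 0 <= M i j0 * M^T j0 i.
  by move=> j0 _; rewrite mxE -expr2; apply: sqr_ge0.
have := psumr_eq0P Hnn Hs (i := j) isT.
by rewrite mxE -expr2 => /eqP; rewrite sqrf_eq0 => /eqP.
Qed.

Lemma gram_unit m n (A : 'M[R]_(m, n)) : row_full A -> A^T *m A \in unitmx.
Proof.
move=> HA; rewrite -row_free_unit; apply: inj_row_free => v Hv.
have H1 : (v *m A^T) *m (v *m A^T)^T = 0.
  by rewrite trmx_mul trmxK mulmxA -(mulmxA v) Hv mul0mx.
have H2 := mmt0 H1.
have H3 : A *m v^T = A *m 0 by rewrite mulmx0 -[A]trmxK -trmx_mul H2 trmx0.
by rewrite -[v]trmxK (row_full_inj HA H3) trmx0.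
Qed.

Lemma gram_unit' m n (A : 'M[R]_(m, n)) : row_free A -> A *m A^T \in unitmx.
Proof.
move=> HA; have := @gram_unit _ _ A^T; rewrite trmxK; apply.
by rewrite /row_full mxrank_tr.
Qed.

Lemma mp_free m n (A : 'M[R]_(m, n)) : row_free A -> exists X, is_mp_inverse A X.
Proof.
move=> HA; have HG := gram_unit' HA.
exists (A^T *m invmx (A *m A^T)).
have AX : A *m (A^T *m invmx (A *m A^T)) = 1%:M by rewrite mulmxA mulmxV.
split.
- by rewrite AX mul1mx.
- by rewrite -!mulmxA AX mulmx1.
- by rewrite AX trmx1.
- rewrite !trmx_mul trmxK trmx_inv trmx_mul trmxK mulmxA //.
Qed.

Lemma mp_full m n (A : 'M[R]_(m, n)) : row_full A -> exists X, is_mp_inverse A X.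
Proof.
move=> HA; have HG := gram_unit HA.
exists (invmx (A^T *m A) *m A^T).
have XA : invmx (A^T *m A) *m A^T *m A = 1%:M by rewrite -mulmxA mulVmx.
split.
- by rewrite -mulmxA XA mulmx1.
- by rewrite XA mul1mx.
- by rewrite !trmx_mul trmxK trmx_inv trmx_mul trmxK mulmxA.
- by rewrite XA trmx1.
Qed.

Lemma mpinvP m n (A : 'M[R]_(m, n)) : (exists X, is_mp_inverse A X) -> is_mp_inverse A (mpinv A).
Proof. by move=> H; rewrite /mpinv; apply: epsilon_spec. Qed.


Lemma frob_le k l (M N : 'M[R]_(k, l)) : fs M <= fs N -> frob M <= frob N.
Proof. by move=> H; rewrite /frob ler_sqrt //; apply: fs_ge0. Qed.

Lemma left_min p m n (W : 'M[R]_(p, n)) (B : 'M[R]_(m, n)) (Y Z : 'M[R]_(n, m)) :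
  is_mp_inverse B Y -> Y *m B = 1%:M -> Z *m B = 1%:M ->
  frob (W *m Y) <= frob (W *m Z).
Proof.
case=> _ HYBY HBY _ YB ZB; apply: frob_le.
set K := Z - Y.
have KB : K *m B = 0 by rewrite /K mulmxBl YB ZB subrr.
have HY : Y = Y *m Y^T *m B^T by rewrite -mulmxA -trmx_mul HBY mulmxA HYBY.
have YK : Y *m K^T = 0 by rewrite HY -!mulmxA -trmx_mul KB trmx0 !mulmx0.
have HZ : Z = Y + K by rewrite /K addrC subrK.
have C1 : (W *m Y) *m (W *m K)^T = 0 by rewrite trmx_mul mulmxA -(mulmxA W) YK mulmx0 mul0mx.
have C2 : (W *m K) *m (W *m Y)^T = 0 by rewrite -[_ *m _^T]trmxK trmx_mul trmxK C1 trmx0.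
clearbody K; rewrite !fs_tr HZ mulmxDr (linearD trmx) mulmxDl !mulmxDr C1 C2 addr0 add0r mxtraceD.
rewrite lerDl -fs_tr; apply: fs_ge0.
Qed.

Lemma right_eq m n (B : 'M[R]_(m, n)) (Y Z : 'M[R]_(n, m)) (N0 : 'M[R]_m) :
  is_mp_inverse B Y -> B *m Y = 1%:M -> B *m Z = 1%:M -> Z = B^T *m N0 -> Y = Z.
Proof.
case=> _ HYBY _ HYB BY BZ HZ.
have HY : Y = B^T *m (Y^T *m Y) by rewrite mulmxA -trmx_mul HYB HYBY.
set N := Y^T *m Y - N0.
have E : Y - Z = B^T *m N by rewrite /N mulmxBr -HY -HZ.
have BN : B *m (B^T *m N) = 0 by rewrite -E mulmxBr BY BZ subrr.
have H0 : (N^T *m B) *m (N^T *m B)^T = 0.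
  by rewrite trmx_mul trmxK -mulmxA BN mulmx0.
have H1 := mmt0 H0.
have H2 : B^T *m N = 0 by rewrite -[N]trmxK -trmx_mul H1 trmx0.
by apply/eqP; rewrite -subr_eq0 E H2.
Qed.

Lemma frob_diag k l (M : 'M[R]_(k, l)) (e : 'rV[R]_l) :
  (forall j, e 0 j ^+ 2 <= 1) -> frob (M *m diag_mx e) <= frob M.
Proof.
move=> He; apply: frob_le; rewrite /fs mul_mx_diag.
apply: ler_sum => i _; apply: ler_sum => j _; rewrite mxE exprMn.
rewrite -[leRHS]mulr1; apply: ler_wpM2l; [exact: sqr_ge0 | exact: He].
Qed.

End S.

Theorem mainTheorem6 (R : rcfType) (p m n : nat)
  (W : 'M[R]_(p, n)) (A : 'M[R]_(m, n)) (D : 'M[R]_m) :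
  full_rank A ->
  is_diag_mx D ->
  (forall i : 'I_m, 1 <= D i i) ->
  frob (W *m mpinv (D *m A)) <= frob (W *m mpinv A).
Proof.
move=> HA /is_diag_mxP HD Hge.
have Hnz : forall i, D i i != 0 by move=> i; apply: lt0r_neq0; apply: lt_le_trans (Hge i).
set Dinv := diag_mx (\row_i (D i i)^-1).
have DDi : D *m Dinv = 1%:M.
  apply/matrixP => i j; rewrite mul_mx_diag !mxE.
  case: (eqVneq i j) => [<-|Hij]; first by rewrite mulfV.
  by rewrite (HD i j) ?mul0r ?(negPf Hij).
have DiD : Dinv *m D = 1%:M.
  apply/matrixP => i j; rewrite mul_diag_mx !mxE.
  case: (eqVneq i j) => [<-|Hij]; first by rewrite mulVf.
  by rewrite (HD i j) ?mulr0 ?(negPf Hij).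
have DU : D \in unitmx by case: (mulmx1_unit DDi).
have rB : \rank (D *m A) = \rank A.
  rewrite -mxrank_tr trmx_mul mxrankMfree ?mxrank_tr //.
  by rewrite row_free_unit unitmx_tr.
have He : forall j, (\row_i (D i i)^-1) 0 j ^+ 2 <= 1.
  move=> j; rewrite mxE; apply: exprn_ile1.
    by rewrite invr_ge0; apply: le_trans (Hge j).
  by rewrite invf_le1 //; apply: lt_le_trans (Hge j).
set B := D *m A.
move: HA; rewrite /full_rank => /eqP HA.
case: (leqP m n) => Hmn.
-
  have fA : row_free A by rewrite /row_free HA; apply/eqP/minn_idPl.
  have fB : row_free B by rewrite /row_free rB HA; apply/eqP/minn_idPl.
  have [HX1 HX2 HX3 HX4] := mpinvP (mp_free fA).
  have PY := mpinvP (mp_free fB).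
  have [HY1 _ _ _] := PY.
  have AX : A *m mpinv A = 1%:M.
    by apply: (row_free_inj fA); rewrite HX1 mul1mx.
  have BY : B *m mpinv B = 1%:M.
    by apply: (row_free_inj fB); rewrite HY1 mul1mx.
  have BZ : B *m (mpinv A *m Dinv) = 1%:M.
    by rewrite /B -mulmxA (mulmxA A) AX mul1mx.
  have EZ : mpinv A *m Dinv = B^T *m (Dinv^T *m (mpinv A)^T *m mpinv A *m Dinv).
    rewrite /B trmx_mul !mulmxA -(mulmxA A^T) -trmx_mul DiD trmx1 mulmx1.
    by rewrite -trmx_mul HX4 HX2.
  rewrite (right_eq PY BY BZ EZ) mulmxA; exact: frob_diag.
-
  have Hmn' : (n <= m)%N by apply: ltnW.
  have fA : row_full A by rewrite /row_full HA; apply/eqP/minn_idPr.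
  have fB : row_full B by rewrite /row_full rB HA; apply/eqP/minn_idPr.
  have [HX1 HX2 HX3 HX4] := mpinvP (mp_full fA).
  have PY := mpinvP (mp_full fB).
  have [HY1 _ _ _] := PY.
  have XA : mpinv A *m A = 1%:M.
    by apply: (row_full_inj fA); rewrite mulmxA HX1 mulmx1.
  have YB : mpinv B *m B = 1%:M.
    by apply: (row_full_inj fB); rewrite mulmxA HY1 mulmx1.
  have ZB : mpinv A *m Dinv *m B = 1%:M.
    by rewrite /B -mulmxA (mulmxA Dinv) DiD mul1mx XA.
  apply: le_trans (left_min W PY YB ZB) _.
  rewrite mulmxA; exact: frob_diag.
Qed.
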